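(* Let $R$ be a commutative Bezout domain. The ring $M_2(R)$ of $2\times 2$ matrices over $R$ has stable range 1.5 if and only if $R$ has stable range 1.5.
   Context: A commutative Bezout domain is a commutative integral domain with $1\ne0$ in which every finitely generated ideal is principal. $R$ has stable range 1.5 if for all $a,b\in R$ and $c\in R\setminus\{0\}$ with $(a,b,c)=1$ there is $r\in R$ with $(a+br,c)=1$. $M_2(R)$ has stable range 1.5 if for all $A,B,C\in M_2(R)$ with $C\neq 0$ which are left relatively prime, i.e. $AM_2(R)+BM_2(R)+CM_2(R)=M_2(R)$ (equivalently their left greatest common divisor is invertible), there exists $T\in M_2(R)$ such that $A+BT$ and $C$ are left relatively prime, i.e. $(A+BT)M_2(R)+CM_2(R)=M_2(R)$. *)

(* Defs.v *)
From HB Require Import structures.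
From mathcomp Require Import all_boot all_order all_algebra.
Set Implicit Arguments. Unset Strict Implicit. Unset Printing Implicit Defensive.
Import GRing.Theory.
Local Open Scope ring_scope.

Definition in_ideal (R : comNzRingType) (s : seq R) (r : R) : Prop :=
  exists c : 'I_(size s) -> R, r = \sum_(i < size s) c i * s`_i.

Definition bezout_domain (R : idomainType) : Prop :=
  forall s : seq R, exists d : R,
    forall r : R, in_ideal s r <-> exists u : R, r = u * d.

Definition stable_range_1_5 (R : comNzRingType) : Prop :=
  forall a b c : R, c != 0 -> in_ideal [:: a; b; c] 1 ->
    exists r : R, in_ideal [:: a + b * r; c] 1.

(* stable range 1.5 of M_2(R): left relatively prime means
   A M_2(R) + B M_2(R) + C M_2(R) = M_2(R) *)
Definition mat2_stable_range_1_5 (R : comNzRingType) : Prop :=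
  forall A B C : 'M[R]_2, C != 0 ->
    (exists X Y Z : 'M[R]_2, A * X + B * Y + C * Z = 1) ->
    exists T : 'M[R]_2, exists X Y : 'M[R]_2, (A + B * T) * X + C * Y = 1.

(* Main.v *)
Require Import Defs.
From mathcomp Require Import all_boot all_order all_algebra.
From mathcomp Require Import ring.
Set Implicit Arguments. Unset Strict Implicit. Unset Printing Implicit Defensive.
Import GRing.Theory.
Local Open Scope ring_scope.

Section S.
Variable R : idomainType.

Lemma in_ideal2 (x y r : R) : in_ideal [:: x; y] r <-> exists p q, r = p * x + q * y.
Proof.
split.
- case=> c ->; exists (c ord0), (c (lift ord0 ord0)).
  by rewrite !big_ord_recl big_ord0 /= addr0.
- case=> p [q ->]; exists (fun i : 'I_2 => [:: p; q]`_i).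
  by rewrite !big_ord_recl big_ord0 /= addr0.
Qed.

Lemma in_ideal3 (x y z r : R) : in_ideal [:: x; y; z] r <-> exists p q w, r = p * x + q * y + w * z.
Proof.
split.
- case=> c ->; exists (c ord0), (c (lift ord0 ord0)), (c (lift ord0 (lift ord0 ord0))).
  by rewrite !big_ord_recl big_ord0 /= addr0 addrA.
- case=> p [q [w ->]]; exists (fun i : 'I_3 => [:: p; q; w]`_i).
  by rewrite !big_ord_recl big_ord0 /= addr0 addrA.
Qed.

Lemma lc1 (x y e f c : R) : e = f -> x - y = (e - f) * c -> x = y.
Proof. by move=> -> /eqP; rewrite subrr mul0r subr_eq0 => /eqP. Qed.

Lemma lc2 (x y e f c e' f' c' : R) : e = f -> e' = f' ->
  x - y = (e - f) * c + (e' - f') * c' -> x = y.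
Proof. by move=> -> -> /eqP; rewrite !subrr !mul0r addr0 subr_eq0 => /eqP. Qed.

Lemma lc3 (x y e f c e' f' c' e'' f'' c'' : R) : e = f -> e' = f' -> e'' = f'' ->
  x - y = (e - f) * c + (e' - f') * c' + (e'' - f'') * c'' -> x = y.
Proof. by move=> -> -> -> /eqP; rewrite !subrr !mul0r !addr0 subr_eq0 => /eqP. Qed.

Hypothesis hB : bezout_domain R.
Hypothesis hS : stable_range_1_5 R.

Lemma gcd2 (x y : R) : exists d p q m1 m2, d = p * x + q * y /\ x = m1 * d /\ y = m2 * d.
Proof.
have [d Hd] := hB [:: x; y].
have [u1 Hu1] : exists u, x = u * d by apply/Hd/in_ideal2; exists 1, 0; ring.
have [u2 Hu2] : exists u, y = u * d by apply/Hd/in_ideal2; exists 0, 1; ring.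
have [p [q Hpq]] : exists p q, d = p * x + q * y by apply/in_ideal2/Hd; exists 1; ring.
by exists d, p, q, u1, u2.
Qed.

Lemma gcd3 (x y z : R) : exists d p q w m1 m2 m3,
  d = p * x + q * y + w * z /\ x = m1 * d /\ y = m2 * d /\ z = m3 * d.
Proof.
have [d Hd] := hB [:: x; y; z].
have [u1 Hu1] : exists u, x = u * d by apply/Hd/in_ideal3; exists 1, 0, 0; ring.
have [u2 Hu2] : exists u, y = u * d by apply/Hd/in_ideal3; exists 0, 1, 0; ring.
have [u3 Hu3] : exists u, z = u * d by apply/Hd/in_ideal3; exists 0, 0, 1; ring.
have [p [q [w Hpq]]] : exists p q w, d = p * x + q * y + w * z by apply/in_ideal3/Hd; exists 1; ring.
by exists d, p, q, w, u1, u2, u3.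
Qed.

Lemma sr (a b c x y z : R) : c != 0 -> x * a + y * b + z * c = 1 ->
  exists r k l, (a + b * r) * k + c * l = 1.
Proof.
move=> c0 H.
have [|r /in_ideal2 [k [l Hkl]]] := hS c0 (_ : in_ideal [:: a; b; c] 1).
  by apply/in_ideal3; exists x, y, z.
by exists r, k, l; rewrite Hkl mulrC (mulrC c).
Qed.

Definition sp4 (g1 g2 g3 g4 : R * R) (p q : R) : Prop := exists x1 x2 x3 x4 : R,
  p = x1 * g1.1 + x2 * g2.1 + x3 * g3.1 + x4 * g4.1 /\
  q = x1 * g1.2 + x2 * g2.2 + x3 * g3.2 + x4 * g4.2.

Section Sp.
Variables g1 g2 g3 g4 : R * R.
Lemma sp4_lin k k' p q p' q' : sp4 g1 g2 g3 g4 p q -> sp4 g1 g2 g3 g4 p' q' ->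
  sp4 g1 g2 g3 g4 (k * p + k' * p') (k * q + k' * q').
Proof.
case=> [x1 [x2 [x3 [x4 [-> ->]]]]] [y1 [y2 [y3 [y4 [-> ->]]]]].
by exists (k*x1 + k'*y1), (k*x2 + k'*y2), (k*x3 + k'*y3), (k*x4 + k'*y4); split; ring.
Qed.
Lemma sp4_eq p q p' q' : sp4 g1 g2 g3 g4 p q -> p = p' -> q = q' -> sp4 g1 g2 g3 g4 p' q'.
Proof. by move=> H <- <-. Qed.
Lemma sp4_g1 : sp4 g1 g2 g3 g4 g1.1 g1.2.
Proof. by exists 1, 0, 0, 0; split; ring. Qed.
End Sp.

Lemma finish (a11 a12 a21 a22 b11 b12 b21 b22 n11 n12 n21 n22 s g u v kk ll c0 al be ga : R) :
  g = u * n12 + v * n22 -> a22 * kk + g * ll = 1 -> c0 != 0 ->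
  c0 = al * a21 + be * n11 + ga * n21 -> 0 = al * a22 + be * n12 + ga * n22 ->
  (exists x1 x2 y1 y2 z1 z2,
     1 = x1 * a11 + x2 * a21 + y1 * b11 + y2 * b21 + z1 * n11 + z2 * n21 /\
     0 = x1 * a12 + x2 * a22 + y1 * b12 + y2 * b22 + z1 * n12 + z2 * n22) ->
  exists t11 t21,
    let a1' := (a11 + t11 * b11 + t21 * b21, a12 + t11 * b12 + t21 * b22) in
    let a2' := (a21 - s * a1'.1, a22 - s * a1'.2) in
    sp4 a1' a2' (n11, n12) (n21, n22) 1 0 /\ sp4 a1' a2' (n11, n12) (n21, n22) 0 1.
Proof.
move=> Hg Hu c00 Hc1 Hc2 [x1 [x2 [y1 [y2 [z1 [z2 [e1a e1b]]]]]]].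
pose nn1 := u * n11 + v * n21.
pose h := a21 * kk + nn1 * ll.
pose psi (w1 w2 : R) := w1 - w2 * h.
pose jj := x2 * psi a21 a22 + z1 * psi n11 n12 + z2 * psi n21 n22.
have Hj : x1 * psi a11 a12 + y1 * psi b11 b12 + y2 * psi b21 b22 + jj = 1.
  have -> : x1 * psi a11 a12 + y1 * psi b11 b12 + y2 * psi b21 b22 + jj =
    (x1 * a11 + x2 * a21 + y1 * b11 + y2 * b21 + z1 * n11 + z2 * n21) -
    (x1 * a12 + x2 * a22 + y1 * b12 + y2 * b22 + z1 * n12 + z2 * n22) * h.
    by rewrite /jj /psi; ring.
  by rewrite -e1a -e1b; ring.
pose inJ (j : R) := exists al be ga, j = al * a21 + be * n11 + ga * n21 /\
   0 = al * a22 + be * n12 + ga * n22.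
have HjJ : inJ jj.
  pose W := x2 * a22 + z1 * n12 + z2 * n22.
  exists (x2 - W * kk), (z1 - W * ll * u), (z2 - W * ll * v); split.
    by rewrite /jj /psi /h /nn1 /W; ring.
  apply: (lc2 Hg Hu (c := - W * ll) (c' := W)).
  by rewrite /W; ring.
have [c [cc [c0n [HcJ Hrel]]]] : exists c cc, c != 0 /\ inJ c /\
    x1 * psi a11 a12 + y1 * psi b11 b12 + y2 * psi b21 b22 + cc * c = 1.
  case: (eqVneq jj 0) => Hj0.
    exists c0, 0; split => //; split; first by exists al, be, ga.
    by rewrite -Hj Hj0; ring.
  by exists jj, 1; split => //; split => //; rewrite mul1r.
have [d' [e [f [m [m' [Hd [Hm Hm']]]]]]] := gcd2 (psi b11 b12) (psi b21 b22).
have [r' [K [L HK]]] : exists r' K L, (psi a11 a12 + d' * r') * K + c * L = 1.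
  apply: (sr (x := x1) (y := y1 * m + y2 * m') (z := cc) c0n).
  by rewrite -Hrel [psi b11 b12 in RHS]Hm [psi b21 b22 in RHS]Hm'; ring.
exists (e * r'), (f * r') => a1' a2'.
have Hpsi : psi a1'.1 a1'.2 = psi a11 a12 + d' * r'.
  by rewrite Hd /a1' /psi /=; ring.
have Ha1 : sp4 a1' a2' (n11, n12) (n21, n22) a1'.1 a1'.2 by apply: sp4_g1.
have Ha2 : sp4 a1' a2' (n11, n12) (n21, n22) a21 a22.
  by exists s, 1, 0, 0; rewrite /a2' /=; split; ring.
have Hn : sp4 a1' a2' (n11, n12) (n21, n22) nn1 g.
  by exists 0, 0, u, v; rewrite /nn1 Hg /=; split; ring.
have Hc : sp4 a1' a2' (n11, n12) (n21, n22) c 0.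
  case: HcJ => [al' [be' [ga' [-> ->]]]].
  by exists (al' * s), al', be', ga'; rewrite /a2' /=; split; ring.
have He1 : sp4 a1' a2' (n11, n12) (n21, n22) 1 0.
  have := sp4_lin K (- K * a1'.2) Ha1 (sp4_lin kk ll Ha2 Hn).
  move/(sp4_lin 1 L)/(_ Hc) => H; apply: (sp4_eq H).
    rewrite mul1r; rewrite -[RHS]HK -Hpsi /psi /h /a1' /=; ring.
  apply: (lc1 Hu (c := - K * a1'.2)); ring.
split => //.
have := sp4_lin kk ll Ha2 Hn; move/(sp4_lin 1 (- h))/(_ He1) => H; apply: (sp4_eq H).
  by rewrite /h; ring.
apply: (lc1 Hu (c := 1)); ring.
Qed.

Lemma key (a11 a12 a21 a22 b11 b12 b21 b22 n11 n12 n21 n22 : R) :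
  (n12 != 0) \/ (n22 != 0) ->
  (exists x1 x2 y1 y2 z1 z2,
     1 = x1 * a11 + x2 * a21 + y1 * b11 + y2 * b21 + z1 * n11 + z2 * n21 /\
     0 = x1 * a12 + x2 * a22 + y1 * b12 + y2 * b22 + z1 * n12 + z2 * n22) ->
  (exists x1 x2 y1 y2 z1 z2,
     0 = x1 * a11 + x2 * a21 + y1 * b11 + y2 * b21 + z1 * n11 + z2 * n21 /\
     1 = x1 * a12 + x2 * a22 + y1 * b12 + y2 * b22 + z1 * n12 + z2 * n22) ->
  exists t11 t21 t12 t22,
    let g1 := (a11 + t11 * b11 + t21 * b21, a12 + t11 * b12 + t21 * b22) in
    let g2 := (a21 + t12 * b11 + t22 * b21, a22 + t12 * b12 + t22 * b22) in
    sp4 g1 g2 (n11, n12) (n21, n22) 1 0 /\ sp4 g1 g2 (n11, n12) (n21, n22) 0 1.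
Proof.
move=> hn H1 [x1' [x2' [y1' [y2' [z1' [z2' [e2a e2b]]]]]]].
have [g [u [v [k1 [k2 [Hg [Hk1 Hk2]]]]]]] := gcd2 n12 n22.
have g0 : g != 0.
  apply/eqP => g0; move: Hk1 Hk2; rewrite g0 !mulr0 => Hk1 Hk2.
  by case: hn; rewrite ?Hk1 ?Hk2 eqxx.
have [d [p0 [p1 [p2 [m0 [m1 [m2 [Hd [Hm0 [Hm1 Hm2]]]]]]]]]] := gcd3 a12 b12 b22.
have [r [kk [ll Hu]]] : exists r kk ll, (a22 + d * r) * kk + g * ll = 1.
  apply: (sr (x := x2') (y := x1' * m0 + y1' * m1 + y2' * m2) (z := z1' * k1 + z2' * k2) g0).
  by rewrite e2b Hm0 Hm1 Hm2 Hk1 Hk2; ring.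
pose nn1 := u * n11 + v * n21.
pose Dc := n11 * n22 - n12 * n21.
pose Dw (w1 w2 : R) := nn1 * w2 - g * w1.
have [s' [t1' [t2' [kk' [ll' [Hu' Hne]]]]]] : exists s' t1' t2' kk' ll',
  (a22 + s' * a12 + t1' * b12 + t2' * b22) * kk' + g * ll' = 1 /\
  (Dc != 0 \/ Dw (a21 + s' * a11 + t1' * b11 + t2' * b21)
                 (a22 + s' * a12 + t1' * b12 + t2' * b22) != 0).
  pose s := p0 * r; pose t1 := p1 * r; pose t2 := p2 * r.
  have Hu0 : (a22 + s * a12 + t1 * b12 + t2 * b22) * kk + g * ll = 1.
    by rewrite -Hu Hd /s /t1 /t2; ring.
  pose P0 := a21 + s * a11 + t1 * b11 + t2 * b21.
  pose q0 := a22 + s * a12 + t1 * b12 + t2 * b22.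
  case: (eqVneq Dc 0) => HDc; last by exists s, t1, t2, kk, ll; split=> //; left.
  case: (eqVneq (Dw P0 q0) 0) => HD0; last by exists s, t1, t2, kk, ll; split=> //; right.
  case: H1 => [x1 [x2 [y1 [y2 [z1 [z2 [e1a e1b]]]]]]].
  have Hid : - g = x1 * Dw a11 a12 + x2 * (Dw P0 q0 - s * Dw a11 a12 - t1 * Dw b11 b12
        - t2 * Dw b21 b22) + y1 * Dw b11 b12 + y2 * Dw b21 b22 - z1 * v * Dc + z2 * u * Dc.
    apply: (lc3 Hg e1a e1b (c := - (z1 * n11 + z2 * n21)) (c' := - g) (c'' := nn1)).
    by rewrite /Dw /P0 /q0 /Dc /nn1; ring.
  case: (eqVneq (Dw a11 a12) 0) => Ha; last first.
    exists (s + g), t1, t2, kk, (ll - kk * a12); split.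
      by rewrite -Hu0; ring.
    right; have -> : Dw (a21 + (s + g) * a11 + t1 * b11 + t2 * b21)
                      (a22 + (s + g) * a12 + t1 * b12 + t2 * b22) = Dw P0 q0 + g * Dw a11 a12.
      by rewrite /Dw /P0 /q0; ring.
    by rewrite HD0 add0r mulf_neq0.
  case: (eqVneq (Dw b11 b12) 0) => Hb1; last first.
    exists s, (t1 + g), t2, kk, (ll - kk * b12); split.
      by rewrite -Hu0; ring.
    right; have -> : Dw (a21 + s * a11 + (t1 + g) * b11 + t2 * b21)
                      (a22 + s * a12 + (t1 + g) * b12 + t2 * b22) = Dw P0 q0 + g * Dw b11 b12.
      by rewrite /Dw /P0 /q0; ring.
    by rewrite HD0 add0r mulf_neq0.
  case: (eqVneq (Dw b21 b22) 0) => Hb2; last first.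
    exists s, t1, (t2 + g), kk, (ll - kk * b22); split.
      by rewrite -Hu0; ring.
    right; have -> : Dw (a21 + s * a11 + t1 * b11 + (t2 + g) * b21)
                      (a22 + s * a12 + t1 * b12 + (t2 + g) * b22) = Dw P0 q0 + g * Dw b21 b22.
      by rewrite /Dw /P0 /q0; ring.
    by rewrite HD0 add0r mulf_neq0.
  move: Hid; rewrite Ha Hb1 Hb2 HD0 HDc => /eqP.
  have -> : x1 * 0 + x2 * (0 - s * 0 - t1 * 0 - t2 * 0) + y1 * 0 + y2 * 0 - z1 * v * 0 + z2 * u * 0 = 0 by ring.
  by rewrite oppr_eq0 (negbTE g0).
pose P := a21 + s' * a11 + t1' * b11 + t2' * b21.
pose q := a22 + s' * a12 + t1' * b12 + t2' * b22.
have [c0 [al [be [ga [c0n [Hc1 Hc2]]]]]] : exists c0 al be ga, c0 != 0 /\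
    c0 = al * P + be * n11 + ga * n21 /\ 0 = al * q + be * n12 + ga * n22.
  case: Hne => Hne.
    exists Dc, 0, n22, (- n12); split => //; rewrite /Dc; split; ring.
  exists (Dw P q), (- g), (q * u), (q * v); split => //; split.
    by rewrite /Dw /nn1; ring.
  by apply: (lc1 Hg (c := q)); ring.
have [|t11 [t21 /= [F1 F2]]] := (@finish a11 a12 P q b11 b12 b21 b22 n11 n12 n21 n22 s' g u v kk' ll' c0 al be ga) Hg Hu' c0n Hc1 Hc2.
  case: H1 => [x1 [x2 [y1 [y2 [z1 [z2 [e1a e1b]]]]]]].
  exists (x1 - x2 * s'), x2, (y1 - x2 * t1'), (y2 - x2 * t2'), z1, z2; split.
    by rewrite {1}e1a /P; ring.
  by rewrite {1}e1b /q; ring.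
exists t11, t21, (t1' - s' * t11), (t2' - s' * t21) => /=.
have E : (a21 + (t1' - s' * t11) * b11 + (t2' - s' * t21) * b21,
          a22 + (t1' - s' * t11) * b12 + (t2' - s' * t21) * b22) =
         (P - s' * (a11 + t11 * b11 + t21 * b21), q - s' * (a12 + t11 * b12 + t21 * b22)).
  by rewrite /P /q; congr (_, _); ring.
by rewrite E.
Qed.
End S.

Section M.
Variable R : idomainType.
Notation i0 := (ord0 : 'I_2).
Notation i1 := (lift ord0 ord0 : 'I_2).

Lemma mul2E (A B : 'M[R]_2) i j : (A * B) i j = A i i0 * B i0 j + A i i1 * B i1 j.
Proof. by rewrite -mulmxE mxE !big_ord_recl big_ord0 addr0. Qed.
Lemma add2E (A B : 'M[R]_2) i j : (A + B) i j = A i j + B i j.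
Proof. by rewrite mxE. Qed.
Lemma one2E i j : (1 : 'M[R]_2) i j = (i == j)%:R.
Proof. by rewrite mxE. Qed.
Lemma ord2 (i : 'I_2) : i = i0 \/ i = i1.
Proof.
case: i => [[|[|n]] Hi]; [left|right|by []]; exact: val_inj.
Qed.
Lemma mat2P (A B : 'M[R]_2) : A i0 i0 = B i0 i0 -> A i0 i1 = B i0 i1 ->
  A i1 i0 = B i1 i0 -> A i1 i1 = B i1 i1 -> A = B.
Proof.
move=> h00 h01 h10 h11; apply/matrixP => i j.
by case: (ord2 i) => ->; case: (ord2 j) => ->.
Qed.
Definition mk2 (a b c d : R) : 'M[R]_2 :=
  \matrix_(i, j) (if i == i0 then (if j == i0 then a else b) else (if j == i0 then c else d)).
Lemma mk2_00 a b c d : mk2 a b c d i0 i0 = a. Proof. by rewrite mxE. Qed.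
Lemma mk2_01 a b c d : mk2 a b c d i0 i1 = b. Proof. by rewrite mxE. Qed.
Lemma mk2_10 a b c d : mk2 a b c d i1 i0 = c. Proof. by rewrite mxE. Qed.
Lemma mk2_11 a b c d : mk2 a b c d i1 i1 = d. Proof. by rewrite mxE. Qed.
Lemma test_one (a : R) : (1 : 'M[R]_2) i0 i1 = 0 /\ (1 : 'M[R]_2) i1 i1 = 1.
Proof. by rewrite !one2E. Qed.
End M.

Section F.
Variable R : idomainType.
Hypothesis hB : bezout_domain R.
Hypothesis hS : stable_range_1_5 R.
Notation i0 := (ord0 : 'I_2).
Notation i1 := (lift ord0 ord0 : 'I_2).

Lemma main_cols (A B C : 'M[R]_2) : (C i1 i0 != 0) \/ (C i1 i1 != 0) ->
  (exists X Y Z : 'M[R]_2, A * X + B * Y + C * Z = 1) ->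
  exists T X Y : 'M[R]_2, (A + B * T) * X + C * Y = 1.
Proof.
move=> hn [X [Y [Z H]]].
have E i j := congr1 (fun M : 'M[R]_2 => M i j) H.
have E00 := E i0 i0; have E01 := E i0 i1; have E10 := E i1 i0; have E11 := E i1 i1.
rewrite /= !add2E !mul2E !one2E /= ?mulr1n ?mulr0n in E00 E01 E10 E11.
have [|| t11 [t21 [t12 [t22 /= [[w1 [w2 [w3 [w4 [Ha Hb]]]]]
      [w1' [w2' [w3' [w4' [Hc Hd]]]]]]]]]] := @key R hB hS (A i0 i0) (A i1 i0) (A i0 i1) (A i1 i1) (B i0 i0) (B i1 i0) (B i0 i1) (B i1 i1) (C i0 i0) (C i1 i0) (C i0 i1) (C i1 i1) hn.
- exists (X i0 i0), (X i1 i0), (Y i0 i0), (Y i1 i0), (Z i0 i0), (Z i1 i0); split.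
    by rewrite -E00; ring.
  by rewrite -E10; ring.
- exists (X i0 i1), (X i1 i1), (Y i0 i1), (Y i1 i1), (Z i0 i1), (Z i1 i1); split.
    by rewrite -E01; ring.
  by rewrite -E11; ring.
exists (mk2 t11 t12 t21 t22), (mk2 w1 w1' w2 w2'), (mk2 w3 w3' w4 w4').
apply: mat2P; rewrite !add2E !mul2E !add2E !mul2E !mk2_00 !mk2_01 !mk2_10 !mk2_11 !one2E /= ?mulr1n ?mulr0n.
- by rewrite [RHS]Ha /=; ring.
- by rewrite [RHS]Hc /=; ring.
- by rewrite [RHS]Hb /=; ring.
- by rewrite [RHS]Hd /=; ring.
Qed.

Lemma dir2 : mat2_stable_range_1_5 R.
Proof.
move=> A B C Cn H.
have [hn|[h10 h11]] : (C i1 i0 != 0 \/ C i1 i1 != 0) \/ (C i1 i0 = 0 /\ C i1 i1 = 0).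
  by case: (eqVneq (C i1 i0) 0) => ?; case: (eqVneq (C i1 i1) 0) => ?; auto.
  exact: main_cols.
pose P := mk2 0 1 1 (0 : R).
have PP : P * P = 1.
  apply: mat2P; rewrite /P !mul2E ?mk2_00 ?mk2_01 ?mk2_10 ?mk2_11 !one2E /= ?mulr1n ?mulr0n; ring.
have hn : (P * C) i1 i0 != 0 \/ (P * C) i1 i1 != 0.
  rewrite /P !mul2E !mk2_10 !mk2_11 !mul0r !addr0 !mul1r.
  case: (eqVneq (C i0 i0) 0) => c00; last by left.
  case: (eqVneq (C i0 i1) 0) => c01; last by right.
  case/negP: Cn; apply/eqP; apply: mat2P; by rewrite mxE.
have [|T [X [Y HT]]] := @main_cols (P * A) (P * B) (P * C) hn.
  case: H => [X [Y [Z H]]]; exists (X * P), (Y * P), (Z * P).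
  have -> : (1 : 'M[R]_2) = P * (A * X + B * Y + C * Z) * P by rewrite H mulr1 PP.
  by rewrite !mulrDr !mulrDl !mulrA.
have e : P * ((A + B * T) * X + C * Y) = 1.
  by rewrite -HT !(mulrDr, mulrDl) !mulrA.
have e2 : (A + B * T) * X + C * Y = P.
  by rewrite -[LHS]mul1r -PP -mulrA e mulr1.
exists T, (X * P), (Y * P).
by rewrite !mulrA -mulrDl e2 PP.
Qed.

Lemma lc4 (x y e1 f1 c1 e2 f2 c2 e3 f3 c3 e4 f4 c4 : R) :
  e1 = f1 -> e2 = f2 -> e3 = f3 -> e4 = f4 ->
  x - y = (e1 - f1) * c1 + (e2 - f2) * c2 + (e3 - f3) * c3 + (e4 - f4) * c4 -> x = y.
Proof. by move=> -> -> -> -> /eqP; rewrite !subrr !mul0r !addr0 subr_eq0 => /eqP. Qed.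
End F.

Lemma dir1 (R : idomainType) : mat2_stable_range_1_5 R -> stable_range_1_5 R.
Proof.
move=> hM a b c cn /in_ideal3 [x [y [z Hxyz]]].
pose A := mk2 a 0 0 (1 : R); pose B := mk2 b 0 0 (0 : R); pose C := mk2 c 0 0 c.
have Cn : C != 0.
  apply/eqP => /(congr1 (fun M : 'M[R]_2 => M ord0 ord0)).
  by rewrite mk2_00 mxE => /eqP; rewrite (negbTE cn).
have [|T [X [Y H]]] := hM A B C Cn.
  exists (mk2 x 0 0 1), (mk2 y 0 0 0), (mk2 z 0 0 0).
  apply: mat2P; rewrite !add2E !mul2E ?mk2_00 ?mk2_01 ?mk2_10 ?mk2_11 !one2E /= ?mulr1n ?mulr0n.
  - by rewrite Hxyz; ring.
  - ring.
  - ring.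
  - ring.
have E i j := congr1 (fun M : 'M[R]_2 => M i j) H.
have E00 := E ord0 ord0; have E01 := E ord0 (lift ord0 ord0).
have E10 := E (lift ord0 ord0) ord0; have E11 := E (lift ord0 ord0) (lift ord0 ord0).
rewrite /= /A /B /C !(add2E, mul2E) ?mk2_00 ?mk2_01 ?mk2_10 ?mk2_11 !one2E /= ?mulr1n ?mulr0n in E00 E01 E10 E11.
exists (T ord0 ord0); apply/in_ideal2.
pose X00 := X ord0 ord0; pose X01 := X ord0 (lift ord0 ord0).
pose X10 := X (lift ord0 ord0) ord0; pose X11 := X (lift ord0 ord0) (lift ord0 ord0).
pose Y00 := Y ord0 ord0; pose Y01 := Y ord0 (lift ord0 ord0).
pose Y10 := Y (lift ord0 ord0) ord0; pose Y11 := Y (lift ord0 ord0) (lift ord0 ord0).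
exists (X00 * X11 - X01 * X10), (Y00 + Y11 - c * Y00 * Y11 + c * Y01 * Y10).
apply: (lc4 E00 E01 E11 E10 (c1 := - X11) (c2 := X10) (c3 := c * Y00 - 1) (c4 := - c * Y01)).
rewrite /X00 /X01 /X10 /X11 /Y00 /Y01 /Y10 /Y11; ring.
Qed.

Theorem theorem2p20 (R : idomainType) :
  bezout_domain R -> (mat2_stable_range_1_5 R <-> stable_range_1_5 R).
Proof. by move=> hB; split; [exact: dir1 | move=> hS; exact: dir2]. Qed.
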